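(* Let $M,N$ be positive integers, $\mathcal{M}=\{1,\dots,M\}$, and let $\omega_N=\{(x_i,\sigma_i)\}_{i=1}^N$ be i.i.d. with respect to the uniform distribution $\mathbb{P}$ over $\mathbb{S}\times\mathcal{M}$. Then, for any $\epsilon\in(0,1)$, with probability no smaller than $1-\mathcal{B}(\epsilon;N)$, $\omega_N$ is an $\epsilon$-covering of $\mathbb{S}\times\mathcal{M}$, where $$\mathcal{B}(\epsilon;N)=\frac{M\left(1-\frac{\delta\left(\frac12\delta^{-1}(\epsilon)\right)}{M}\right)^N}{\delta\left(\frac14\delta^{-1}(\epsilon)\right)}.$$
   Context: $\mathbb{S}$ is the unit sphere in $\mathbb{R}^n$ and $\mu$ the uniform probability measure on $\mathbb{S}$; the uniform distribution on $\mathbb{S}\times\mathcal{M}$ is the product of $\mu$ and the uniform distribution on $\mathcal{M}$. For $x\in\mathbb{S}$, $\theta\in[0,\pi/2]$, $\mathrm{Cap}(x,\theta)=\{v\in\mathbb{S}:|x^\top v|\ge\cos\theta\}$ and $\delta(\theta)=\mu(\mathrm{Cap}(x,\theta))$; $\delta$ is strictly increasing from $[0,\pi/2]$ onto $[0,1]$ with inverse $\delta^{-1}$. Given $\epsilon\in(0,1)$ and $\theta=\delta^{-1}(\epsilon)$, a set $\omega\subset\mathbb{S}\times\mathcal{M}$ is an $\epsilon$-covering of $\mathbb{S}\times\mathcal{M}$ if for every $(x,\sigma)\in\mathbb{S}\times\mathcal{M}$ there exists $z\in\mathbb{S}$ with $(z,\sigma)\in\omega$ and $|z^\top x|\ge\cos\theta$.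 *)

(* Defs.v *)
From HB Require Import structures.
From mathcomp Require Import all_boot all_order all_algebra.
From mathcomp Require Import all_classical all_reals all_analysis.
Set Implicit Arguments. Unset Strict Implicit. Unset Printing Implicit Defensive.
Import Order.TTheory GRing.Theory Num.Theory.
Local Open Scope classical_set_scope.
Local Open Scope ring_scope.

Section Defs.
Variables (R : realType) (n : nat).

(* points of R^n are n-tuples, with the product Borel sigma-algebra *)
Definition dotp (x y : n.-tuple R) : R := \sum_(i < n) tnth x i * tnth y i.

Definition sphere : set (n.-tuple R) := [set x | dotp x x = 1].

Definition e0 : n.-tuple R := [tuple ((i : nat) == 0%N)%:R | i < n].

Definition Cap (x : n.-tuple R) (theta : R) : set (n.-tuple R) :=
  [set v | sphere v /\ cos theta <= `| dotp x v |].

(* mu is "the uniform probability measure on S":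
   a probability measure concentrated on S and invariant under all
   orthogonal transformations of R^n *)
Definition orthogonal_map (Q : n.-tuple R -> n.-tuple R) : Prop :=
  forall x y, dotp (Q x) (Q y) = dotp x y.

Definition uniform_on_sphere (mu : probability (n.-tuple R) R) : Prop :=
  mu sphere = 1%E /\
  forall Q, orthogonal_map Q ->
    forall A, measurable A -> mu (Q @^-1` A) = mu A.

(* delta(theta) = mu(Cap(x, theta)) (independent of x by invariance) *)
Definition delta (mu : probability (n.-tuple R) R) (theta : R) : R :=
  fine (mu (Cap e0 theta)).

(* omega = {(z_i, sigma_i)}_{i<N} is an eps-covering of S x M, where
   theta = delta^{-1}(eps) *)
Definition covering (M N : nat) (theta : R)
    (omega : 'I_N -> n.-tuple R * 'I_M) : Prop :=
  forall (x : n.-tuple R) (s : 'I_M), sphere x ->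
    exists i : 'I_N, (omega i).2 = s /\ sphere (omega i).1 /\
      cos theta <= `| dotp (omega i).1 x |.

Definition Bbound (mu : probability (n.-tuple R) R) (M N : nat) (theta : R) : R :=
  M%:R * (1 - delta mu (theta / 2) / M%:R) ^+ N / delta mu (theta / 4).

End Defs.

(* Main.v *)
Require Import Defs.
From HB Require Import structures.
From mathcomp Require Import all_boot all_order all_algebra.
From mathcomp Require Import all_classical all_reals all_analysis.
From mathcomp Require Import ring lra.
Import Order.TTheory GRing.Theory Num.Theory.
Local Open Scope classical_set_scope.
Local Open Scope ring_scope.
Set Implicit Arguments. Unset Strict Implicit. Unset Printing Implicit Defensive.

Section Vec.
Variables (R : realType) (n : nat).
Implicit Types (a b c x y z v w : n.-tuple R).

Definition vsub a b : n.-tuple R := [tuple tnth a i - tnth b i | i < n].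
Definition vsc (t : R) a : n.-tuple R := [tuple t * tnth a i | i < n].

Lemma dotpC a b : dotp a b = dotp b a.
Proof. by apply: eq_bigr => i _; rewrite mulrC. Qed.

Lemma dotp_subl a b c : dotp (vsub a b) c = dotp a c - dotp b c.
Proof.
rewrite /dotp -sumrB; apply: eq_bigr => i _; rewrite tnth_mktuple; ring.
Qed.

Lemma dotp_subr a b c : dotp c (vsub a b) = dotp c a - dotp c b.
Proof. by rewrite dotpC dotp_subl !(dotpC c). Qed.

Lemma dotp_scl t a c : dotp (vsc t a) c = t * dotp a c.
Proof.
rewrite /dotp mulr_sumr; apply: eq_bigr => i _; rewrite tnth_mktuple; ring.
Qed.

Lemma dotp_scr t a c : dotp c (vsc t a) = t * dotp c a.
Proof. by rewrite dotpC dotp_scl dotpC. Qed.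

Lemma dotp_ge0 a : 0 <= dotp a a.
Proof. by apply: sumr_ge0 => i _; rewrite -expr2 sqr_ge0. Qed.

Lemma CS a b : dotp a b ^+ 2 <= dotp a a * dotp b b.
Proof.
have key t : 0 <= dotp a a - 2 * t * dotp a b + t ^+ 2 * dotp b b.
  have := dotp_ge0 (vsub a (vsc t b)).
  rewrite !dotp_subl !dotp_subr !dotp_scl !dotp_scr (dotpC b a).
  by congr (0 <= _); ring.
have hA := dotp_ge0 a; have hB := dotp_ge0 b.
set A := dotp a a in key hA *; set B := dotp b b in key hB *;
set C := dotp a b in key *.
have [B0|Bpos] := eqVneq B 0.
  rewrite B0 mulr0.
  have [C0|Cn0] := eqVneq C 0; first by rewrite C0 expr0n.
  have := key ((A + 1) / (2 * C)); rewrite B0 mulr0 addr0.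
  have -> : 2 * ((A + 1) / (2 * C)) * C = A + 1 by field; rewrite Cn0.
  lra.
have Bp : 0 < B by rewrite lt_def Bpos hB.
have := key (C / B).
have -> : A - 2 * (C / B) * C + (C / B) ^+ 2 * B = (A * B - C ^+ 2) / B.
  by field; rewrite Bpos.
rewrite pmulr_lge0 ?invr_gt0 //; lra.
Qed.

Lemma CS_abs a b : `|dotp a b| ^+ 2 <= dotp a a * dotp b b.
Proof. by rewrite real_normK ?num_real // CS. Qed.

Lemma tri a b c (al be : R) :
  sphere a -> sphere b -> sphere c ->
  0 <= al -> 0 <= be -> al + be <= pi / 2 ->
  cos al <= `|dotp a b| -> cos be <= `|dotp b c| ->
  cos (al + be) <= `|dotp a c|.
Proof.
rewrite /sphere /= => ha hb hc al0 be0 albe hab hbc.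
set p := dotp a b; set q := dotp c b.
have hq : `|dotp b c| = `|q| by rewrite /q dotpC.
rewrite hq in hbc.
have pi2 : 0 < pi / 2 :> R by rewrite divr_gt0 // pi_gt0.
have cal : 0 <= cos al by apply: cos_ge0_pihalf; lra.
have cbe : 0 <= cos be by apply: cos_ge0_pihalf; lra.
have sal : 0 <= sin al by apply: sin_ge0_pi; lra.
have sbe : 0 <= sin be by apply: sin_ge0_pi; lra.
have sca := cos2Dsin2 al; have scb := cos2Dsin2 be.
pose a' := vsub a (vsc p b); pose c' := vsub c (vsc q b).
have e1 : dotp a c = p * q + dotp a' c'.
  rewrite /a' /c' !dotp_subl !dotp_subr !dotp_scl !dotp_scr hb.
  rewrite ?[dotp b a]dotpC ?[dotp b c]dotpC -?/p -?/q. ring.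
have e2 : dotp a' a' = 1 - p ^+ 2.
  rewrite /a' !dotp_subl !dotp_subr !dotp_scl !dotp_scr hb ha.
  rewrite ?[dotp b a]dotpC -?/p. ring.
have e3 : dotp c' c' = 1 - q ^+ 2.
  rewrite /c' !dotp_subl !dotp_subr !dotp_scl !dotp_scr hb hc.
  rewrite ?[dotp b c]dotpC -?/q. ring.
have cs := CS_abs a' c'; rewrite e2 e3 in cs.
have cp : 0 <= 1 - p ^+ 2 by rewrite -e2 dotp_ge0.
have cq : 0 <= 1 - q ^+ 2 by rewrite -e3 dotp_ge0.
have p2 : cos al ^+ 2 <= p ^+ 2.
  by rewrite -(real_normK (num_real p)) !expr2; apply: ler_pM.
have q2 : cos be ^+ 2 <= q ^+ 2.
  by rewrite -(real_normK (num_real q)) !expr2; apply: ler_pM.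
set X := `|dotp a' c'| in cs.
have X0 : 0 <= X by rewrite /X normr_ge0.
have hX : X <= sin al * sin be.
  have : X ^+ 2 <= (sin al * sin be) ^+ 2.
    apply: (le_trans cs); rewrite exprMn.
    apply: ler_pM; [lra|lra|lra|lra].
  have := mulr_ge0 sal sbe; nra.
rewrite cosD e1.
have hpq : cos al * cos be <= `|p * q| by rewrite normrM; apply: ler_pM.
have : `|p * q| - X <= `|p * q + dotp a' c'|.
  have := ler_normB (p * q + dotp a' c') (dotp a' c').
  rewrite addrK.
  have := ler_normD (p * q + dotp a' c') (- dotp a' c'); rewrite addrK normrN.
  rewrite /X; lra.
lra.
Qed.

End Vec.

Section Geo.
Variables (R : realType) (n : nat).
Implicit Types (a b c x y z v w : n.-tuple R).

Lemma e0_unit : (0 < n)%N -> dotp (e0 R n) (e0 R n) = 1.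
Proof.
case: n => [//|n'] _; rewrite /dotp big_ord_recl !tnth_mktuple /= mulr1.
rewrite big1 ?addr0 // => i _; rewrite !tnth_mktuple /=; by rewrite mulr0.
Qed.

Definition hhu u v : n.-tuple R := vsub v (vsc (2 * dotp u v / dotp u u) u).
Definition hh y := hhu (vsub y (e0 R n)).

Lemma hhu_orth u : orthogonal_map (hhu u).
Proof.
move=> x z; rewrite /hhu /=.
rewrite !dotp_subl !dotp_subr !dotp_scl !dotp_scr.
rewrite ?[dotp x u]dotpC ?[dotp z u]dotpC.
have [u0|un0] := eqVneq (dotp u u) 0.
  by rewrite u0 invr0 !mulr0 !mul0r !subr0.
by field.
Qed.

Lemma hh_orth y : orthogonal_map (hh y).
Proof. exact: hhu_orth. Qed.

Lemma hh_e0 y v : (0 < n)%N -> sphere y ->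
  dotp (e0 R n) (hh y v) = dotp y v.
Proof.
move=> n0 hy; rewrite /hh /hhu /=; set u := vsub y (e0 R n).
rewrite dotp_subr dotp_scr.
have uu : dotp u u = 2 - 2 * dotp (e0 R n) y.
  rewrite /u !dotp_subl !dotp_subr e0_unit // hy [dotp y _]dotpC; ring.
have ue : dotp (e0 R n) u = dotp (e0 R n) y - 1.
  by rewrite /u dotp_subr e0_unit.
have uv : dotp u v = dotp y v - dotp (e0 R n) v by rewrite /u dotp_subl.
have [u0|un0] := eqVneq (dotp u u) 0.
  have : dotp u v ^+ 2 <= 0 by have := CS u v; rewrite u0 mul0r.
  rewrite uv; move=> h; rewrite u0 invr0 mulr0 mul0r subr0.
  have : (dotp y v - dotp (e0 R n) v) ^+ 2 = 0.
    by apply/eqP; rewrite eq_le h sqr_ge0.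
  move/eqP; rewrite sqrf_eq0 subr_eq0 => /eqP ->. by [].
rewrite ue uv; rewrite uu in un0 *; field.
by [].
Qed.

Definition nrm q : n.-tuple R := vsc (Num.sqrt (dotp q q))^-1 q.

Lemma nrm_sphere q : 0 < dotp q q -> sphere (nrm q).
Proof.
move=> qp; rewrite /sphere /= /nrm dotp_scl dotp_scr mulrA -expr2 exprVn.
by rewrite sqr_sqrtr ?ltW // mulVf // gt_eqF.
Qed.

Lemma dotp_nrml q b : dotp (nrm q) b = dotp q b / Num.sqrt (dotp q q).
Proof. by rewrite /nrm dotp_scl mulrC. Qed.

Lemma mdotp x : measurable_fun setT (fun v : n.-tuple R => dotp x v).
Proof.
rewrite /dotp; apply: measurable_sum => i.
apply: measurable_realfun.measurable_funM; first exact: measurable_cst.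
exact: measurable_tnth.
Qed.

Lemma mdotp2 : measurable_fun setT (fun v : n.-tuple R => dotp v v).
Proof.
rewrite /dotp; apply: measurable_sum => i.
by apply: measurable_realfun.measurable_funM; exact: measurable_tnth.
Qed.

Lemma msphere : measurable (sphere (R:=R) (n:=n)).
Proof.
have := mdotp2 measurableT (measurable_set1 (1:R)).
by rewrite setTI.
Qed.

Lemma mCap x th : measurable (Cap x th).
Proof.
have h : measurable_fun setT (fun v : n.-tuple R => `|dotp x v|).
  exact: (measurableT_comp (@measurable_realfun.normr_measurable R setT) (mdotp x)).
have := h measurableT `[cos th, +oo[%classic (measurable_itv _).
rewrite setTI => hm.
have -> : Cap x th = @sphere R n `&` ((fun v => `|dotp x v|) @^-1` `[cos th, +oo[).
  apply/seteqP; split => v /=; rewrite in_itv /= andbT //.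
apply: measurableI => //; exact: msphere.
Qed.

End Geo.

Section Inv.
Variables (R : realType) (n : nat) (mu : probability (n.-tuple R) R).

Lemma pfin (A : set (n.-tuple R)) : measurable A -> mu A = (fine (mu A))%:E.
Proof. by move=> mA; rewrite fineK // fin_num_measure. Qed.

Lemma capE y th : (0 < n)%N -> uniform_on_sphere mu -> sphere y ->
  mu (Cap y th) = (delta mu th)%:E.
Proof.
move=> n0 [_ inv] hy.
rewrite /delta -pfin ?mCap //.
rewrite -(inv (hh y) (@hh_orth R n y) (Cap (e0 R n) th) (mCap _ _)).
congr (mu _); apply/seteqP; split => v /=.
- rewrite /Cap /sphere /= hh_orth hh_e0 //.
- rewrite /Cap /sphere /= hh_orth hh_e0 //.
exact: mCap.
Qed.

Lemma delta_ge0 th : 0 <= delta mu th.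
Proof. by rewrite /delta fine_ge0. Qed.

Lemma delta_le1 th : delta mu th <= 1.
Proof.
rewrite /delta; have := probability_le1 mu (mCap (e0 R n) th).
rewrite (pfin (mCap (e0 R n) th)) lee_fin //.
Qed.

End Inv.

Section Sep.
Variables (R : realType) (n : nat) (mu : probability (n.-tuple R) R).
Hypothesis n0 : (0 < n)%N.
Hypothesis unif : uniform_on_sphere mu.

Lemma cap_disj (y y' v : n.-tuple R) (al : R) : sphere y -> sphere y' -> 0 <= al ->
  al + al <= pi / 2 -> `|dotp y y'| < cos (al + al) ->
  Cap y al v -> Cap y' al v -> False.
Proof.
move=> hy hy' al0 hal hlt [hv c1] [_ c2].
have c2' : cos al <= `|dotp v y'| by rewrite dotpC.
have := tri hy hv hy' al0 al0 hal c1 c2'.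
lra.
Qed.

Lemma sep_bound al K (f : 'I_K -> n.-tuple R) :
  0 <= al -> al + al <= pi / 2 -> (forall i, sphere (f i)) ->
  (forall i j, i != j -> `|dotp (f i) (f j)| < cos (al + al)) ->
  K%:R * delta mu al <= 1.
Proof.
move=> al0 hal hs hsep.
pose F := fun i : 'I_K => Cap (f i) al.
have mF : forall i, measurable (F i) by move=> i; exact: mCap.
have tF : trivIset setT F.
  move=> i j _ _ [x [Fi Fj]]; case: (eqVneq i j) => // ij; exfalso.
  exact: (cap_disj (hs i) (hs j) al0 hal (hsep _ _ ij) Fi Fj).
have := measure_bigsetU_ord mu predT mF tF.
have -> : (\sum_(i < K | predT i) mu (F i) = \sum_(i < K | predT i) (delta mu al)%:E)%E.
  by apply: eq_bigr => i _; exact: capE.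
rewrite sumEFin sumr_const card_ord mulr_natl => h.
have mU : measurable (\big[setU/set0]_(i < K | predT i) F i).
  by apply: bigsetU_measurable => i _; exact: mF.
have := probability_le1 mu mU.
by rewrite h lee_fin -mulr_natl.
Qed.

End Sep.

Section Theta.
Variables (R : realType) (n : nat) (mu : probability (n.-tuple R) R).
Hypothesis n2 : (2 <= n)%N.
Hypothesis unif : uniform_on_sphere mu.

Definition ak (k : nat) : n.-tuple R :=
  [tuple (if (i : nat) == 0%N then 1 else if (i : nat) == 1%N then k%:R else 0) | i < n].

Lemma dotp_ak j k : dotp (ak j) (ak k) = 1 + j%:R * k%:R.
Proof.
have h0 : (0 < n)%N by apply: leq_trans n2.
pose i0 : 'I_n := Ordinal h0. pose i1 : 'I_n := Ordinal n2.
rewrite /dotp (bigD1 i0) // (bigD1 i1) //= big1 ?addr0.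
  by rewrite !tnth_mktuple /= mul1r.
move=> i /andP[hi0 hi1]; rewrite !tnth_mktuple /=.
have -> : ((i : nat) == 0%N) = false by apply/negbTE; move: hi0; apply: contra => /eqP h; apply/eqP/val_inj.
have -> : ((i : nat) == 1%N) = false by apply/negbTE; move: hi1; apply: contra => /eqP h; apply/eqP/val_inj.
by rewrite mulr0.
Qed.

Lemma delta0 : delta mu 0 = 0.
Proof.
have n0 : (0 < n)%N by apply: leq_trans n2.
apply/eqP; rewrite eq_le delta_ge0 andbT; apply/negPn/negP; rewrite -ltNge => dp.
pose K := (Num.truncn ((delta mu 0)^-1)).+1.
pose f := fun i : 'I_K => nrm (ak i).
have akp (j : nat) : 0 < dotp (ak j) (ak j).
  by rewrite dotp_ak; have := sqr_ge0 (j%:R : R); rewrite expr2; lra.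
have hs i : sphere (f i) by apply: nrm_sphere.
have := @sep_bound R n mu n0 unif 0 K f (lexx 0) _ hs.
rewrite addr0 cos0 => /(_ _ _) h.
have : (K%:R * delta mu 0 <= 1).
  apply: h; first by have := pi_gt0 R; lra.
  move=> i j ij; rewrite /f dotp_nrml dotpC dotp_nrml !dotp_ak.
  set A := dotp (ak i) (ak i); set B := dotp (ak j) (ak j).
  have Ap : 0 < A by apply: akp.
  have Bp : 0 < B by apply: akp.
  have eA : A = 1 + i%:R * i%:R :> R by rewrite /A dotp_ak.
  have eB : B = 1 + j%:R * j%:R :> R by rewrite /B dotp_ak.
  have sA := sqr_sqrtr (ltW Ap); have sB := sqr_sqrtr (ltW Bp).
  have sA0 : 0 < Num.sqrt A by rewrite sqrtr_gt0.
  have sB0 : 0 < Num.sqrt B by rewrite sqrtr_gt0.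
  have ijR : (i%:R : R) != j%:R by rewrite eqr_nat.
  have d2 : 0 < ((i%:R : R) - j%:R) ^+ 2.
    by rewrite lt_def sqr_ge0 andbT sqrf_eq0 subr_eq0.
  have i0 : 0 <= (i%:R : R) by []. have j0 : 0 <= (j%:R : R) by [].
  set C := 1 + j%:R * i%:R.
  have C0 : 0 < C by have := mulr_ge0 j0 i0; rewrite /C; lra.
  rewrite -eA -eB ger0_norm; last by rewrite !divr_ge0 // ?sqrtr_ge0 // ltW.
  rewrite -mulrA -invfM ltr_pdivrMr ?mulr_gt0 // mul1r.
  have : C ^+ 2 < (Num.sqrt B * Num.sqrt A) ^+ 2.
    rewrite exprMn sA sB eA eB /C; nra.
  have := mulr_gt0 sB0 sA0; nra.
have := truncnS_gt ((delta mu 0)^-1).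
rewrite -/K => hK h2.
have : (delta mu 0)^-1 * delta mu 0 < K%:R * delta mu 0 by rewrite ltr_pM2r.
rewrite mulVf ?gt_eqF //; lra.
Qed.

End Theta.

Section Dense.
Variables (R : realType) (n : nat).
Hypothesis n0 : (0 < n)%N.

Definition vq (q : {ffun 'I_n -> rat}) : n.-tuple R := [tuple ratr (q i) | i < n].

Definition dseq (k : nat) : n.-tuple R :=
  match (unpickle k : option {ffun 'I_n -> rat}) with
  | Some q => if 0 < dotp (vq q) (vq q) then nrm (vq q) else e0 R n
  | None => e0 R n
  end.

Lemma dseq_sphere k : sphere (dseq k).
Proof.
rewrite /dseq; case: unpickle => [q|]; last exact: e0_unit.
case: ifP => [h|_]; [exact: nrm_sphere | exact: e0_unit].
Qed.

Lemma dense_aux x eta : sphere x -> 0 < eta <= 1 ->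
  exists k, 1 - eta <= dotp (dseq k) x.
Proof.
move=> hx /andP[e0 e1].
set r := eta / 2.
have r0 : 0 < r by rewrite /r; lra.
have r1 : r <= 1 / 2 by rewrite /r; lra.
set h := r / n%:R.
have nR : 1 <= (n%:R : R) by rewrite ler1n.
have h0 : 0 < h by rewrite /h divr_gt0 // ltr0n.
have hq : forall i : 'I_n, exists q : rat,
    ratr q \in `]tnth x i - h, tnth x i + h[.
  by move=> i; apply: rat_in_itvoo; lra.
have [qf Hq] := choice hq.
pose q := [ffun i => qf i].
pose v := vq q.
pose w := vsub v x.
have hw : forall i, `|tnth w i| < h.
  move=> i; have := Hq i; rewrite in_itv /= /w /v /vq !tnth_mktuple ffunE => /andP[a b].
  rewrite ltr_norml; apply/andP; split; lra.
have ww : dotp w w <= r ^+ 2.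
  have : dotp w w <= n%:R * h ^+ 2.
    have -> : (n%:R : R) * h ^+ 2 = \sum_(i < n) h ^+ 2.
      by rewrite sumr_const card_ord mulr_natl.
    rewrite /dotp.
    apply: ler_sum => i _; rewrite -expr2 -real_normK ?num_real //.
    have := hw i; have := normr_ge0 (tnth w i); nra.
  move=> H; apply: (le_trans H).
  have nz : (n%:R : R) != 0 by rewrite pnatr_eq0 -lt0n.
  have -> : n%:R * h ^+ 2 = r ^+ 2 / n%:R by rewrite /h; field.
  rewrite ler_pdivrMr ?ltr0n //; have : 0 < r ^+ 2 by rewrite exprn_gt0.
  nra.
have xw : `|dotp x w| <= r.
  have := CS_abs x w; rewrite hx mul1r => H.
  have := le_trans H ww; have := normr_ge0 (dotp x w); nra.
have exv : dotp x v = 1 + dotp x w by rewrite /w dotp_subr hx; ring.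
have evv : dotp v v = dotp w w + 2 * dotp x w + 1.
  rewrite /w !dotp_subl !dotp_subr hx (dotpC v x); ring.
have xv0 : 1 - r <= dotp x v.
  by move: xw; rewrite ler_norml => /andP[a b]; rewrite exv; lra.
have vv0 : 0 < dotp v v.
  have := CS x v; rewrite hx mul1r => H.
  have : 1 / 4 <= dotp x v ^+ 2 by nra.
  lra.
have vvle : dotp v v <= (1 + r) ^+ 2.
  rewrite evv; have := ler_norm (dotp x w); nra.
exists (pickle q).
rewrite /dseq pickleK -/v vv0 dotp_nrml dotpC.
set s := Num.sqrt (dotp v v).
have s0 : 0 < s by rewrite sqrtr_gt0.
have s1 : s <= 1 + r.
  rewrite /s -(@ger0_norm _ (1 + r)); last lra.
  by rewrite -sqrtr_sqr ler_sqrt // exprn_ge0 //; lra.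
rewrite ler_pdivlMr //.
have : (1 - eta) * s <= (1 - eta) * (1 + r) by apply: ler_wpM2l; lra.
rewrite /r in r0 r1 xv0 *; nra.
Qed.

Lemma dens x eta : sphere x -> 0 < eta -> exists k, 1 - eta <= dotp (dseq k) x.
Proof.
move=> hx e0.
have [k hk] := dense_aux (eta := Num.min eta 1) hx
  (ltac:(rewrite lt_min e0 ltr01 /= ge_min lexx orbT //)).
exists k; apply: le_trans hk; rewrite lerD2l lerN2 ge_min lexx //.
Qed.

End Dense.

Section Pos.
Variables (R : realType) (n : nat) (mu : probability (n.-tuple R) R).
Hypothesis n0 : (0 < n)%N.
Hypothesis unif : uniform_on_sphere mu.

Lemma cos_lt1 (al : R) : 0 < al -> al <= pi / 2 -> cos al < 1.
Proof.
move=> a0 a1; rewrite -(cos0 R).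
have hp := pi_gt0 R.
rewrite ltr_cos // in_itv /=; apply/andP; split; lra.
Qed.

Lemma delta_pos al : 0 < al -> al <= pi / 2 -> 0 < delta mu al.
Proof.
move=> a0 a1; rewrite lt_def delta_ge0 andbT; apply/eqP => d0.
have c1 := cos_lt1 a0 a1.
have sub : @sphere R n `<=` \bigcup_k Cap (dseq R n k) al.
  move=> x hx; have [k hk] := @dens R n n0 x (1 - cos al) hx ltac:(lra).
  exists k => //; split; first exact: hx.
  apply: le_trans (ler_norm _); lra.
have := measure_sigma_subadditive mu (fun k => mCap (dseq R n k) al) (@msphere R n) sub.
rewrite eseries0; last by move=> i _ _ /=; rewrite (capE _ n0 unif (dseq_sphere R n0 i)) d0.
by case: unif => hS _; move: hS; rewrite /= => ->; rewrite lee_fin; lra.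
Qed.

Definition sepP al K (f : 'I_K -> n.-tuple R) :=
  (forall i, sphere (f i)) /\
  (forall i j, i != j -> `|dotp (f i) (f j)| < cos (al + al)).

Lemma maxfam al : 0 <= al -> al + al <= pi / 2 -> 0 < delta mu al ->
  exists K (f : 'I_K -> n.-tuple R),
    (forall i, sphere (f i)) /\ K%:R * delta mu al <= 1 /\
    forall x, sphere x -> exists i, cos (al + al) <= `|dotp (f i) x|.
Proof.
move=> a0 a1 dp.
pose P := fun k => `[< exists f : 'I_k -> n.-tuple R, sepP al f >].
have exP : exists k, P k.
  exists 0%N; apply/asboolP; exists (fun i => e0 R n).
  by split; case.
have ubP : forall k, P k -> (k <= Num.truncn (delta mu al)^-1)%N.
  move=> k /asboolP [f [hs hsep]].
  have h := sep_bound n0 unif a0 a1 hs hsep.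
  rewrite truncn_ge_nat; last by rewrite invr_ge0 ltW.
  by rewrite -(ler_pM2r dp) mulVf ?gt_eqF.
case: (ex_maxnP exP ubP) => K /asboolP [f [hs hsep]] Kmax.
exists K, f; split; first exact: hs.
split; first exact: (sep_bound n0 unif a0 a1 hs hsep).
move=> x hx; apply: contrapT => hno.
have hlt : forall i, `|dotp (f i) x| < cos (al + al).
  move=> i; rewrite ltNge; apply/negP => h; apply: hno; by exists i.
pose g := fun i : 'I_K.+1 => if unlift ord_max i is Some j then f j else x.
have : P K.+1.
  apply/asboolP; exists g; split.
    by move=> i; rewrite /g; case: unliftP.
  move=> i j ij; rewrite /g.
  case: unliftP => [i' ei|ei]; case: unliftP => [j' ej|ej].
  - by move: ij; rewrite ei ej (inj_eq (@lift_inj _ ord_max)) => ij; exact: hsep.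
  - exact: hlt.
  - by rewrite dotpC; exact: hlt.
  - by move: ij; rewrite ei ej eqxx.
by move/Kmax; rewrite ltnn.
Qed.

End Pos.

Lemma mem_bigsetU (T : Type) (I : eqType) (r : seq I) (F : I -> set T) x :
  (\big[setU/set0]_(i <- r) F i) x <-> exists i, i \in r /\ F i x.
Proof.
elim: r => [|a r IH]; first by rewrite big_nil; split => // -[i []].
rewrite big_cons; split.
  case=> [h|/IH [i [ir Fi]]]; first by exists a; rewrite mem_head.
  by exists i; rewrite in_cons ir orbT.
case=> i []; rewrite in_cons => /orP[/eqP ->|ir] Fi; first by left.
by right; apply/IH; exists i.
Qed.

Lemma mem_bigsetI (T : Type) (I : eqType) (r : seq I) (F : I -> set T) x :
  (\big[setI/setT]_(i <- r) F i) x <-> forall i, i \in r -> F i x.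
Proof.
elim: r => [|a r IH]; first by rewrite big_nil.
rewrite big_cons; split.
  case=> Fa /IH h i; rewrite in_cons => /orP[/eqP ->|ir] //; exact: h.
move=> h; split; first by apply: h; rewrite mem_head.
by apply/IH => i ir; apply: h; rewrite in_cons ir orbT.
Qed.

Section Meas.
Variables (d : measure_display) (T : measurableType d).

Lemma mforall (I : finType) (F : I -> set T) : (forall i, measurable (F i)) ->
  measurable [set w | forall i, F i w].
Proof.
move=> mF.
have -> : [set w | forall i, F i w] = \big[setI/setT]_(i <- enum I) F i.
  apply/seteqP; split => w /=.
    by move=> h; apply/mem_bigsetI => i _; apply: h.
  move/mem_bigsetI => h i; apply: h; by rewrite mem_enum.
by apply: bigsetI_measurable => i _; apply: mF.
Qed.

Lemma mexists (I : finType) (F : I -> set T) : (forall i, measurable (F i)) ->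
  measurable [set w | exists i, F i w].
Proof.
move=> mF.
have -> : [set w | exists i, F i w] = \big[setU/set0]_(i <- enum I) F i.
  apply/seteqP; split => w /=.
    by case=> i h; apply/mem_bigsetU; exists i; rewrite mem_enum.
  by move/mem_bigsetU => [i [_ h]]; exists i.
by apply: bigsetU_measurable => i _; apply: mF.
Qed.

End Meas.

Section Prob.
Variables (R : realType) (n M N : nat) (mu : probability (n.-tuple R) R)
  (dO : measure_display) (Omega : measurableType dO) (P : probability Omega R)
  (X : 'I_N -> Omega -> n.-tuple R) (Sg : 'I_N -> Omega -> 'I_M).
Hypothesis M0 : (0 < M)%N.
Hypothesis mX : forall i, measurable_fun setT (X i).
Hypothesis mS : forall i k, measurable (Sg i @^-1` [set k]).
Hypothesis hrect : forall (A : 'I_N -> set (n.-tuple R)) (B : 'I_N -> {set 'I_M}),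
      (forall i, measurable (A i)) ->
      P [set w | forall i, A i (X i w) /\ Sg i w \in B i] =
      (\prod_(i < N) (fine (mu (A i)) * (#|B i|%:R / M%:R)))%:E.

Lemma pfinP (A : set Omega) : measurable A -> P A = (fine (P A))%:E.
Proof. by move=> mA; rewrite fineK // fin_num_measure. Qed.

Lemma mXp i A : measurable A -> measurable (X i @^-1` A).
Proof. by move=> mA; have := mX i measurableT mA; rewrite setTI. Qed.

Lemma mSin i (B : {set 'I_M}) : measurable [set w | Sg i w \in B].
Proof.
have -> : [set w | Sg i w \in B] =
    [set w | exists k : 'I_M, (if k \in B then Sg i @^-1` [set k] else set0) w].
  apply/seteqP; split => w /=.
    by move=> h; exists (Sg i w); rewrite h.
  by case=> k; case: ifP => // kB /= ->.
by apply: mexists => k; case: ifP => _ //; apply: mS.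
Qed.

Definition Bad (C : set (n.-tuple R)) (s : 'I_M) :=
  [set w | forall i, ~ (C (X i w) /\ Sg i w = s)].

Lemma mBad C s : measurable C -> measurable (Bad C s).
Proof.
move=> mC; apply: mforall => i; apply: measurableC.
by apply: measurableI; [apply: mXp | apply: mS].
Qed.

Lemma bad_prob C s : measurable C ->
  P (Bad C s) = ((1 - fine (mu C) / M%:R) ^+ N)%:E.
Proof.
move=> mC.
pose Aset (b : bool) := if b then ~` C else C.
pose Bset (b : bool) : {set 'I_M} := if b then [set: 'I_M]%SET else [set~ s]%SET.
pose Rect (f : {ffun 'I_N -> bool}) :=
  [set w | forall i, Aset (f i) (X i w) /\ Sg i w \in Bset (f i)].
pose K := #|{ffun 'I_N -> bool}|.
pose F := fun k : 'I_K => Rect (enum_val k).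
have mA b : measurable (Aset b) by case: b => //=; apply: measurableC.
have mF k : measurable (F k).
  by apply: mforall => i; apply: measurableI; [apply: mXp; exact: mA | apply: mSin].
have eqB : Bad C s = \big[setU/set0]_(k < K) F k.
  apply/seteqP; split => w.
  - move=> hb; apply/mem_bigsetU.
    pose f := [ffun i => `[< ~ C (X i w) >]].
    exists (enum_rank f); split; first exact: mem_index_enum.
    rewrite /F /Rect enum_rankK => j; rewrite ffunE /=.
    case: asboolP => h /=; first by split => //; rewrite inE.
    split; first exact: contrapT.
    rewrite !inE; apply/eqP => e; apply: (hb j); split => //; exact: contrapT.
  - move/mem_bigsetU => [kk [_ hk]] ii [hC hs].
    have := hk ii; case: (enum_val kk ii) => /= [[hnc _]|[_ hin]]; first exact: hnc.
    by move: hin; rewrite !inE hs eqxx.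
have tF : trivIset setT F.
  move=> k1 k2 _ _ [w [Fk Fk']]; apply: enum_val_inj; apply/ffunP => ii.
  have := Fk ii; have := Fk' ii.
  by case: (enum_val k1 ii); case: (enum_val k2 ii) => //= [[a _] [b _]] //; exfalso.
rewrite eqB measure_bigsetU_ord //.
pose g (f : {ffun 'I_N -> bool}) :=
  \prod_(i < N) (fine (mu (Aset (f i))) * (#|Bset (f i)|%:R / M%:R)).
have -> : (\sum_(k < K | xpredT k) P (F k) = \sum_(k < K) (g (enum_val k))%:E)%E.
  apply: eq_bigr => k _; rewrite /F /Rect /g.
  have := @hrect (fun i => Aset (enum_val k i)) (fun i => Bset (enum_val k i)) (fun i => mA _).
  move=> ->. by [].
rewrite sumEFin; congr (_%:E).
rewrite -(big_enum_val (A := {ffun 'I_N -> bool}) g) /g.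
rewrite -(bigA_distr_bigA (fun (i : 'I_N) (b : bool) =>
            fine (mu (Aset b)) * (#|Bset b|%:R / M%:R))) /=.
rewrite [X in X = _](eq_bigr (fun _ => 1 - fine (mu C) / M%:R)).
  by rewrite prodr_const card_ord.
move=> i _; rewrite big_bool /= cardsT cardsC1 card_ord.
rewrite probability_setC // (pfin mu mC) /=.
move: M0; case: M => [//|m] _ /=.
have mz : (m.+1%:R : R) != 0 by rewrite pnatr_eq0.
by field.
Qed.

Lemma union_bound (I : finType) (F : I -> set Omega) :
  (forall i, measurable (F i)) ->
  1 - \sum_i fine (P (F i)) <= fine (P [set w | forall i, ~ F i w]).
Proof.
move=> mF.
pose G (r : seq I) := [set w | forall i, i \in r -> ~ F i w].
have mG r : measurable (G r).
  have -> : G r = [set w | forall i, (if i \in r then ~` F i else setT) w].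
    apply/seteqP; split => w /=.
      by move=> h i; case: ifP => ir //=; exact: h.
    by move=> h i ir; have := h i; rewrite ir.
  by apply: mforall => i; case: ifP => _ //; apply: measurableC.
have key r : 1 - \sum_(i <- r) fine (P (F i)) <= fine (P (G r)).
  elim: r => [|a r IH].
    rewrite big_nil subr0.
    have -> : G [::] = setT by apply/seteqP; split => // w _ i.
    by rewrite probability_setT.
  rewrite big_cons.
  have sub : G r `<=` G (a :: r) `|` F a.
    move=> w hw; have [Fa|nFa] := pselect (F a w); first by right.
    left => i; rewrite in_cons => /orP[/eqP ->//|ir]; exact: hw.
  have := le_measure P (mem_set (mG r)) (mem_set (measurableU _ _ (mG (a :: r)) (mF a))) sub.
  move/le_trans => /(_ _ (measureU2 P (mG (a :: r)) (mF a))).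
  move=> h.
  have : ((fine (P (G r)))%:E <= (fine (P (G (a :: r))))%:E + (fine (P (F a)))%:E)%E.
    by rewrite -(pfinP (mG r)) -(pfinP (mG (a :: r))) -(pfinP (mF a)).
  rewrite -EFinD lee_fin.
  lra.
have := key (enum I); rewrite big_enum /=.
have -> // : G (enum I) = [set w | forall i, ~ F i w].
by apply/seteqP; split => w /= h i; [apply: h; rewrite mem_enum | move=> _; apply: h].
Qed.

End Prob.

Section Cov.
Variables (R : realType) (n M N : nat)
  (dO : measure_display) (Omega : measurableType dO)
  (X : 'I_N -> Omega -> n.-tuple R) (Sg : 'I_N -> Omega -> 'I_M).
Hypothesis n0 : (0 < n)%N.
Hypothesis mX : forall i, measurable_fun setT (X i).
Hypothesis mS : forall i k, measurable (Sg i @^-1` [set k]).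

Lemma mcover (theta : R) :
  measurable [set w | covering theta (fun i => (X i w, Sg i w))].
Proof.
pose C' := fun k : nat => [set w | forall s : 'I_M, exists i : 'I_N,
   (Sg i @^-1` [set s] `&` X i @^-1` Cap (dseq R n k) theta) w].
have mC' k : measurable (C' k).
  apply: mforall => s; apply: mexists => i; apply: measurableI => //.
  by have := mX i measurableT (mCap (dseq R n k) theta); rewrite setTI.
suff -> : [set w | covering theta (fun i => (X i w, Sg i w))] = \bigcap_k C' k.
  exact: bigcapT_measurable.
apply/seteqP; split => w /=.
  move=> hc k _ s; have [i [h1 [h2 h3]]] := hc (dseq R n k) s (dseq_sphere R n0 k).
  by exists i; split => //=; split => //; rewrite dotpC.
move=> hC x s hx; apply: contrapT => hno.
pose m := fun i : 'I_N => if (Sg i w == s) && (dotp (X i w) (X i w) == 1)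
  then cos theta - `|dotp (X i w) x| else 1.
have mpos i : 0 < m i.
  rewrite /m; case: ifP => // /andP[/eqP e1 /eqP e2].
  rewrite subr_gt0 ltNge; apply/negP => h; apply: hno; exists i; split => //.
have etp : 0 < \big[Order.min/1]_i m i.
  by apply: (big_ind (fun x => 0 < x)) => // a b ha hb; rewrite lt_min ha hb.
set et := \big[Order.min/1]_i m i in etp.
have [k hk] := @dens R n n0 x (et ^+ 2 / 8) hx ltac:(by apply: divr_gt0 => //; apply: exprn_gt0).
have [i [/= hs [hz hd]]] := hC k I s.
set d := dseq R n k in hk hd; set z := X i w in hz hd.
have hd1 : sphere d by exact: dseq_sphere.
have mi : et <= m i by apply: bigmin_le.
rewrite /m hs eqxx /= -/z in mi.
move: hz; rewrite /sphere /= => hz; rewrite hz eqxx /= in mi.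
have e1 : dotp (vsub d x) (vsub d x) = 2 - 2 * dotp d x.
  by rewrite !dotp_subl !dotp_subr hd1 hx (dotpC x d); ring.
have cs := CS_abs z (vsub d x); rewrite hz mul1r e1 in cs.
have a2 : `|dotp z (vsub d x)| <= et / 2.
  have := normr_ge0 (dotp z (vsub d x)); nra.
have tr : `|dotp z d| <= `|dotp z x| + `|dotp z (vsub d x)|.
  have -> : dotp z d = dotp z x + dotp z (vsub d x) by rewrite dotp_subr; ring.
  exact: ler_normD.
rewrite dotpC in hd.
lra.
Qed.

End Cov.

Unset Implicit Arguments. Set Strict Implicit. Set Printing Implicit Defensive.

Theorem lemma2 (R : realType) (n M N : nat)
  (mu : probability (n.-tuple R) R)
  (dO : measure_display) (Omega : measurableType dO) (P : probability Omega R)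
  (X : 'I_N -> Omega -> n.-tuple R) (Sg : 'I_N -> Omega -> 'I_M)
  (eps theta : R) :
  (2 <= n)%N -> (0 < M)%N -> (0 < N)%N ->
  uniform_on_sphere mu ->
  (forall i, measurable_fun setT (X i)) ->
  (forall i k, measurable (Sg i @^-1` [set k])) ->
  (forall (A : 'I_N -> set (n.-tuple R)) (B : 'I_N -> {set 'I_M}),
      (forall i, measurable (A i)) ->
      P [set w | forall i, A i (X i w) /\ Sg i w \in B i] =
      (\prod_(i < N) (fine (mu (A i)) * (#|B i|%:R / M%:R)))%:E) ->
  0 < eps < 1 ->
  0 <= theta <= pi / 2 -> delta mu theta = eps ->
  ((1 - Bbound mu M N theta)%:E <=
     P [set w | covering theta (fun i => (X i w, Sg i w))])%E.
Proof.
move=> n2 M0 N0 unif mX mS hrect /andP[e0 e1] /andP[t0 t1] dte.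
have n0 : (0 < n)%N by apply: leq_trans n2.
have tp : 0 < theta.
  rewrite lt_def t0 andbT; apply/eqP => t00.
  by move: dte; rewrite t00 (delta0 n2 unif) => ez; rewrite -ez ltxx in e0.
have hp := pi_gt0 R.
have d4 : 0 < delta mu (theta / 4) by apply: (delta_pos n0 unif); lra.
have [K [f [hs [Kd hcov]]]] := maxfam n0 unif (al := theta / 4)
  ltac:(lra) ltac:(lra) d4.
pose Fb := fun p : 'I_K * 'I_M => Bad X Sg (Cap (f p.1) (theta / 2)) p.2.
have mFb p : measurable (Fb p).
  by apply: mBad => //; exact: mCap.
have ub := union_bound P mFb.
pose b := (1 - delta mu (theta / 2) / M%:R) ^+ N.
have Fbp p : fine (P (Fb p)) = b.
  have mc := mCap (f p.1) (theta / 2).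
  have := bad_prob M0 mX mS hrect p.2 mc.
  rewrite /Fb => ->. by rewrite (capE _ n0 unif (hs p.1)).
rewrite (eq_bigr (fun _ => b)) in ub; last by move=> pp _; exact: Fbp.
rewrite sumr_const card_prod !card_ord in ub.
pose Good := [set w | forall p, ~ Fb p w].
have mGood : measurable Good by apply: mforall => p; apply: measurableC.
have sub : Good `<=` [set w | covering theta (fun i => (X i w, Sg i w))].
  move=> w hG x s hx.
  have [j hj] := hcov x hx.
  have := hG (j, s); rewrite /Fb /Bad /= => /existsNP [i /contrapT [[hz hc] hsi]].
  exists i; split => //; split => //=.
  have -> : theta = theta / 2 + theta / 2 by field.
  have hc' : cos (theta / 2) <= `|dotp (X i w) (f j)| by rewrite dotpC.
  have hj' : cos (theta / 2) <= `|dotp (f j) x|.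
    by have -> : theta / 2 = theta / 4 + theta / 4 by field.
  apply: (tri hz (hs j) hx) => //; lra.
have := le_measure P (mem_set mGood) (mem_set (mcover n0 mX mS theta)) sub.
apply: le_trans.
apply: (@le_trans _ _ ((fine (P Good))%:E)); last by rewrite -(pfinP P mGood).
rewrite lee_fin.
apply: le_trans ub.
rewrite /Bbound -/b lerD2l lerN2.
have d2 : 0 <= delta mu (theta / 2) <= 1 by rewrite delta_ge0 delta_le1.
have Mr : 1 <= (M%:R : R) by rewrite ler1n.
have b0 : 0 <= b.
  rewrite /b exprn_ge0 // subr_ge0 ler_pdivrMr; last lra.
  lra.
have -> : b *+ (K * M) = b * (K%:R * M%:R) by rewrite -mulr_natr natrM.
rewrite ler_pdivlMr //.
have KM : 0 <= (M%:R : R) * b by apply: mulr_ge0 => //; lra.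
have := ler_wpM2l KM Kd; rewrite mulr1 => h.
apply: le_trans h; rewrite le_eqVlt; apply/orP; left; apply/eqP; ring.
Qed.
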